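(* If a dual-convex $m\times n$ net in $I^3$ is flexible in $I^3$, then every dual-convex $m\times n$ net that is a Combescure transformation of it, and every dual-convex $m\times n$ net obtained from it by a dual-affine transformation, is flexible in $I^3$.
   Context: $I^3$ is $\mathbb{R}^3$ with coordinates $(x,y,z)$; isotropic = parallel to the $z$-axis; top view of $(x,y,z)$ is $(x,y)$. Isotropic congruences: maps $\mathbf{x}\mapsto A\mathbf{x}+\mathbf{b}$, $A=\begin{pmatrix}\cos\phi&-\sin\phi&0\\ \sin\phi&\cos\phi&0\\ c_1&c_2&1\end{pmatrix}$. Metric duality: point $P=(P^1,P^2,P^3)\leftrightarrow$ plane $P^*\colon z=P^1x+P^2y-P^3$. An $m\times n$ net: points $F_{ij}$, $0\le i\le m,0\le j\le n$, with $F_{ij},F_{i+1,j},F_{i+1,j+1},F_{i,j+1}$ consecutive vertices of a convex planar quadrilateral (face $p_{ij}$) for all $0\le i<m,0\le j<n$. Boundary vertices: $i\in\{0,m\}$ or $j\in\{0,n\}$; consecutive faces around non-boundary $F_{ij}$: $p_{i-1,j-1},p_{i,j-1},p_{ij},p_{i-1,j}$. Convex 4-hedral angle with vertex $O$, flat angles, admissible (isotropic line through $O$ meets interior) as usual; dual-convex: $m,n\ge2$ and at each non-boundary vertex the four consecutive face planes are the planes of four consecutive flat angles of an admissible convex 4-hedral angle. Curvature at non-boundary vertex with consecutive faces $p_1..p_4$: $\Omega=\frac12\sum_{k=1}^4\det(\overline{p_k^*},\overline{p_{k+1}^*})$, $p_5=p_1$. Flexible in $I^3$: there is a continuous family of $m\times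 n$ nets $F_{ij}(t)$, $t\in[0,1]$, $F_{ij}(0)=F_{ij}$, with corresponding faces isotropically congruent, corresponding non-boundary vertices of equal curvature, and not for every $t$ an isotropic congruence $C_t$ with $F_{ij}(t)=C_t(F_{ij})$ for all $i,j$. Combescure transformation: a net with the same index set whose corresponding edges are parallel. Dual-affine transformation: a projective transformation of the projective closure of $I^3$ that keeps the $z$-direction (fixes the point at infinity of the $z$-axis). *)

(* Defs.v *)
From HB Require Import structures.
From mathcomp Require Import all_boot all_order all_algebra.
From mathcomp Require Import all_classical all_reals all_analysis.
Set Implicit Arguments. Unset Strict Implicit. Unset Printing Implicit Defensive.
Import Order.TTheory GRing.Theory Num.Theory.
Import numFieldNormedType.Exports.
Local Open Scope ring_scope.

Section Isotropic.
Variable R : realType.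

Record pt := Pt { px : R; py : R; pz : R }.

Definition psub (P Q : pt) : pt := Pt (px P - px Q) (py P - py Q) (pz P - pz Q).
Definition padd (P Q : pt) : pt := Pt (px P + px Q) (py P + py Q) (pz P + pz Q).
Definition pscale (s : R) (P : pt) : pt := Pt (s * px P) (s * py P) (s * pz P).
Definition dot (P Q : pt) : R := px P * px Q + py P * py Q + pz P * pz Q.
Definition cross (P Q : pt) : pt :=
  Pt (py P * pz Q - pz P * py Q) (pz P * px Q - px P * pz Q) (px P * py Q - py P * px Q).
Definition pzero : pt := Pt 0 0 0.

Record icong := ICong { c_phi : R; c_c1 : R; c_c2 : R; c_b : pt }.
Definition icong_apply (C : icong) (P : pt) : pt :=
  Pt (cos (c_phi C) * px P - sin (c_phi C) * py P + px (c_b C))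
     (sin (c_phi C) * px P + cos (c_phi C) * py P + py (c_b C))
     (c_c1 C * px P + c_c2 C * py P + pz P + pz (c_b C)).

(* A, B, C, D are consecutive vertices of a (nondegenerate) convex planar
   quadrilateral: the open diagonals AC and BD cross, and A, B, C are not
   collinear. *)
Definition convex_quad (A B C D : pt) : Prop :=
  cross (psub B A) (psub C A) <> pzero /\
  exists s t : R, 0 < s < 1 /\ 0 < t < 1 /\
    padd A (pscale s (psub C A)) = padd B (pscale t (psub D B)).

(* a net: indices 0 <= i <= m, 0 <= j <= n *)
Definition net := nat -> nat -> pt.

Definition is_net (m n : nat) (F : net) : Prop :=
  forall i j, (i < m)%N -> (j < n)%N ->
    convex_quad (F i j) (F i.+1 j) (F i.+1 j.+1) (F i j.+1).

Definition face_normal (F : net) (i j : nat) : pt :=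
  cross (psub (F i.+1 j) (F i j)) (psub (F i.+1 j.+1) (F i j)).

(* top view of the metric dual point p^* of the (non-isotropic) plane of face
   p_ij, i.e. (a, b) where the plane is z = a x + b y - c *)
Definition dual_top (F : net) (i j : nat) : R * R :=
  let N := face_normal F i j in (- px N / pz N, - py N / pz N).

Definition det2 (u v : R * R) : R := u.1 * v.2 - u.2 * v.1.

Definition curvature (F : net) (i j : nat) : R :=
  let p1 := dual_top F i.-1 j.-1 in
  let p2 := dual_top F i j.-1 in
  let p3 := dual_top F i j in
  let p4 := dual_top F i.-1 j in
  (det2 p1 p2 + det2 p2 p3 + det2 p3 p4 + det2 p4 p1) / 2.

(* convex 4-hedral angle with vertex O and edge directions v 0..3 (cyclic order,
   flat angles spanned by v k, v (k+1)); l k is an inner normal of the k-th flat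
   angle (vanishing on v k, v (k+1), positive on the two other edges). *)
Definition vk (v : nat -> pt) (k : nat) : pt := v (k %% 4)%N.

Definition flat_angle_normals (v : nat -> pt) (l : nat -> pt) : Prop :=
  forall k, (k < 4)%N ->
    cross (vk v k) (vk v k.+1) <> pzero /\
    dot (l k) (vk v k) = 0 /\ dot (l k) (vk v k.+1) = 0 /\
    0 < dot (l k) (vk v k.+2) /\ 0 < dot (l k) (vk v k.+3).

(* admissible convex 4-hedral angle: the isotropic line through O meets the
   interior { O + x | forall k, dot (l k) x > 0 } *)
Definition admissible_convex_4hedral (v : nat -> pt) : Prop :=
  exists l, flat_angle_normals v l /\
    exists s : R, forall k, (k < 4)%N -> 0 < s * pz (l k).

Definition flat_plane_is_face (O : pt) (v : nat -> pt) (k : nat)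
  (F : net) (i j : nat) : Prop :=
  let N := face_normal F i j in
  dot N (psub O (F i j)) = 0 /\ dot N (vk v k) = 0 /\ dot N (vk v k.+1) = 0.

Definition dual_convex (m n : nat) (F : net) : Prop :=
  (2 <= m)%N /\ (2 <= n)%N /\ is_net m n F /\
  forall i j, (1 <= i < m)%N -> (1 <= j < n)%N ->
    exists (O : pt) (v : nat -> pt), admissible_convex_4hedral v /\
      flat_plane_is_face O v 0 F i.-1 j.-1 /\
      flat_plane_is_face O v 1 F i j.-1 /\
      flat_plane_is_face O v 2 F i j /\
      flat_plane_is_face O v 3 F i.-1 j.

Definition flexible (m n : nat) (F : net) : Prop :=
  exists Fam : R -> net,
    (forall i j, (i <= m)%N -> (j <= n)%N -> Fam 0 i j = F i j) /\
    (forall t, 0 <= t <= 1 -> is_net m n (Fam t)) /\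
    (forall i j, (i <= m)%N -> (j <= n)%N ->
       {within `[0%R, 1%R], continuous (fun t : R => px (Fam t i j))}%classic /\
       {within `[0%R, 1%R], continuous (fun t : R => py (Fam t i j))}%classic /\
       {within `[0%R, 1%R], continuous (fun t : R => pz (Fam t i j))}%classic) /\
    (forall t, 0 <= t <= 1 -> forall i j, (i < m)%N -> (j < n)%N ->
       exists C : icong,
         icong_apply C (F i j) = Fam t i j /\
         icong_apply C (F i.+1 j) = Fam t i.+1 j /\
         icong_apply C (F i.+1 j.+1) = Fam t i.+1 j.+1 /\
         icong_apply C (F i j.+1) = Fam t i j.+1) /\
    (forall t, 0 <= t <= 1 -> forall i j, (1 <= i < m)%N -> (1 <= j < n)%N ->
       curvature (Fam t) i j = curvature F i j) /\
    ~ (forall t, 0 <= t <= 1 -> exists C : icong,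
         forall i j, (i <= m)%N -> (j <= n)%N -> Fam t i j = icong_apply C (F i j)).

Definition parallel (u w : pt) : Prop := cross u w = pzero.

Definition combescure (m n : nat) (F G : net) : Prop :=
  (forall i j, (i < m)%N -> (j <= n)%N ->
     parallel (psub (G i.+1 j) (G i j)) (psub (F i.+1 j) (F i j))) /\
  (forall i j, (i <= m)%N -> (j < n)%N ->
     parallel (psub (G i j.+1) (G i j)) (psub (F i j.+1) (F i j))).

(* dual-affine transformations: projective maps of P^3 (homogeneous
   coordinates (x:y:z:1)) given by an invertible 4x4 matrix fixing the point at
   infinity (0:0:1:0) of the z-axis *)
Definition hom (P : pt) : 'cV[R]_4 :=
  \col_(k < 4) (match val k with 0 => px P | 1 => py P | 2 => pz P | _ => 1 end).
Definition ez : 'cV[R]_4 := \col_(k < 4) (if val k == 2%N then 1 else 0).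

Definition dual_affine (M : 'M[R]_4) : Prop :=
  M \in unitmx /\ exists c : R, M *m ez = c *: ez.

Definition dual_affine_image (m n : nat) (F G : net) : Prop :=
  exists M : 'M[R]_4, dual_affine M /\
    forall i j, (i <= m)%N -> (j <= n)%N ->
      let h := M *m hom (F i j) in
      h 3%:R 0 != 0 /\
      G i j = Pt (h 0 0 / h 3%:R 0) (h 1%:R 0 / h 3%:R 0) (h 2%:R 0 / h 3%:R 0).

End Isotropic.

(* Main.v *)
Require Import Defs.
From HB Require Import structures.
From mathcomp Require Import all_boot all_order all_algebra.
From mathcomp Require Import all_classical all_reals all_analysis.
From mathcomp Require Import ring lra zify.
Import Order.TTheory GRing.Theory Num.Theory.
Import numFieldNormedType.Exports.
Set Implicit Arguments. Unset Strict Implicit. Unset Printing Implicit Defensive.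
Local Open Scope ring_scope.

Section S1.
Variable R : realType.
Lemma sum4 (f : 'I_4 -> R) : \sum_(k < 4) f k = f 0 + f 1%:R + f 2%:R + f 3%:R.
Proof.
rewrite !big_ord_recl big_ord0 addr0 !addrA.
by congr (_ + _ + _ + _); congr f; apply/val_inj.
Qed.
Lemma homE (P : pt R) : Defs.hom P 0 0 = px P /\ Defs.hom P 1%:R 0 = py P /\ Defs.hom P 2%:R 0 = pz P /\ Defs.hom P 3%:R 0 = 1.
Proof. by rewrite !mxE. Qed.
Lemma wcD (A : set R) (f g : R -> R) : {within A, continuous f}%classic -> {within A, continuous g}%classic ->
  {within A, continuous (fun t => f t + g t)}%classic.
Proof. move=> hf hg x; exact: continuousD (hf x) (hg x). Qed.
Lemma wcM (A : set R) (f g : R -> R) : {within A, continuous f}%classic -> {within A, continuous g}%classic ->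
  {within A, continuous (fun t => f t * g t)}%classic.
Proof. move=> hf hg x; exact: continuousM (hf x) (hg x). Qed.
Lemma wcC (A : set R) (k : R) : {within A, continuous (fun _ : R => k)}%classic.
Proof. move=> x; exact: cst_continuous. Qed.
Lemma wcN (A : set R) (f : R -> R) : {within A, continuous f}%classic ->
  {within A, continuous (fun t => - f t)}%classic.
Proof. move=> hf x; exact: continuousN (hf x). Qed.
End S1.
Section S2.
Variable R : realType.
Implicit Types (A B C D P Q : pt R).

Lemma ptE (p : pt R) : p = Pt (px p) (py p) (pz p). Proof. by case: p. Qed.

Definition rotp (co si : R) (a : R * R) := (co * a.1 - si * a.2, si * a.1 + co * a.2).
Definition addp (a b : R * R) := (a.1 + b.1, a.2 + b.2).
Definition cv (C : icong R) := (c_c1 C, c_c2 C).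
Definition Om (q0 q1 q2 q3 : R * R) := (det2 q0 q1 + det2 q1 q2 + det2 q2 q3 + det2 q3 q0) / 2.
Definition onpl (q : R * R) (e : R) P := pz P = q.1 * px P + q.2 * py P + e.

Lemma sq3 (x y z : R) : x * x + y * y + z * z = 0 -> x = 0 /\ y = 0 /\ z = 0.
Proof.
move=> h.
have hx : x * x == 0 by rewrite eq_le; apply/andP; split; nra.
have hy : y * y == 0 by rewrite eq_le; apply/andP; split; nra.
have hz : z * z == 0 by rewrite eq_le; apply/andP; split; nra.
move: hx hy hz; rewrite !mulf_eq0 !orbb => /eqP -> /eqP -> /eqP ->; done.
Qed.

Lemma cross_img (C : icong R) A B D :
  let N := cross (psub B A) (psub D A) in
  let N' := cross (psub (icong_apply C B) (icong_apply C A)) (psub (icong_apply C D) (icong_apply C A)) in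
  let co := cos (c_phi C) in let si := sin (c_phi C) in
  [/\ pz N' = pz N,
      px N' = co * px N - si * py N - (c_c1 C * co - c_c2 C * si) * pz N &
      py N' = si * px N + co * py N - (c_c1 C * si + c_c2 C * co) * pz N].
Proof.
move=> N N' co si.
have hcs : co ^+ 2 + si ^+ 2 = 1 by exact: cos2Dsin2.
have hz : pz N' = (co ^+ 2 + si ^+ 2) * pz N.
  by rewrite /N' /N /icong_apply /= -/co -/si; ring.
split; first by rewrite hz hcs mul1r.
  by rewrite /N' /N /icong_apply /= -/co -/si; ring.
by rewrite /N' /N /icong_apply /= -/co -/si; ring.
Qed.

Lemma dual_img (C : icong R) A B D :
  let N := cross (psub B A) (psub D A) in
  let N' := cross (psub (icong_apply C B) (icong_apply C A)) (psub (icong_apply C D) (icong_apply C A)) in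
  pz N != 0 ->
  (- px N' / pz N', - py N' / pz N') =
    rotp (cos (c_phi C)) (sin (c_phi C)) (addp (- px N / pz N, - py N / pz N) (cv C)).
Proof.
move=> N N' hN.
have [hz hx hy] := cross_img C A B D.
rewrite -/N -/N' in hz hx hy.
rewrite hz hx hy /rotp /addp /cv /=.
by congr pair; field.
Qed.

Lemma det2_rot co si a b : co ^+ 2 + si ^+ 2 = 1 -> det2 (rotp co si a) (rotp co si b) = det2 a b.
Proof.
move=> h; have -> : det2 (rotp co si a) (rotp co si b) = (co ^+ 2 + si ^+ 2) * det2 a b.
  by rewrite /det2 /rotp /=; ring.
by rewrite h mul1r.
Qed.

Lemma Om_rot co si a b c d : co ^+ 2 + si ^+ 2 = 1 ->
  Om (rotp co si a) (rotp co si b) (rotp co si c) (rotp co si d) = Om a b c d.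
Proof. by move=> h; rewrite /Om !det2_rot. Qed.

Lemma aff_img (C : icong R) A D s :
  padd (icong_apply C A) (pscale s (psub (icong_apply C D) (icong_apply C A))) =
  icong_apply C (padd A (pscale s (psub D A))).
Proof. by rewrite /icong_apply /padd /pscale /psub /=; congr Pt; ring. Qed.

Lemma cq_img (C : icong R) A B D E :
  convex_quad A B D E ->
  convex_quad (icong_apply C A) (icong_apply C B) (icong_apply C D) (icong_apply C E).
Proof.
case=> hN [s [t [hs [ht he]]]]; split.
  move=> h0; apply: hN.
  have [hz hx hy] := cross_img C A B D.
  rewrite h0 in hz hx hy.
  have hcs : cos (c_phi C) ^+ 2 + sin (c_phi C) ^+ 2 = 1 by exact: cos2Dsin2.
  set N := cross (psub B A) (psub D A) in hz hx hy *.
  have ez : pz N = 0 by rewrite -hz.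
  rewrite ez mulr0 subr0 in hx; rewrite ez mulr0 subr0 in hy.
  have ex : px N = 0.
    have -> : px N = (cos (c_phi C) ^+ 2 + sin (c_phi C) ^+ 2) * px N by rewrite hcs mul1r.
    have -> : (cos (c_phi C) ^+ 2 + sin (c_phi C) ^+ 2) * px N =
      cos (c_phi C) * (cos (c_phi C) * px N - sin (c_phi C) * py N) +
      sin (c_phi C) * (sin (c_phi C) * px N + cos (c_phi C) * py N) by ring.
    by rewrite -hx -hy /=; ring.
  have ey : py N = 0.
    have -> : py N = (cos (c_phi C) ^+ 2 + sin (c_phi C) ^+ 2) * py N by rewrite hcs mul1r.
    have -> : (cos (c_phi C) ^+ 2 + sin (c_phi C) ^+ 2) * py N =
      - sin (c_phi C) * (cos (c_phi C) * px N - sin (c_phi C) * py N) +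
      cos (c_phi C) * (sin (c_phi C) * px N + cos (c_phi C) * py N) by ring.
    by rewrite -hx -hy /=; ring.
  by rewrite [N]ptE ex ey ez.
exists s, t; split=> //; split=> //.
by rewrite !aff_img he.
Qed.

Lemma plane_D q e A B D E s t : t != 0 ->
  padd A (pscale s (psub D A)) = padd B (pscale t (psub E B)) ->
  onpl q e A -> onpl q e B -> onpl q e D -> onpl q e E.
Proof.
move=> ht he.
move: (congr1 (@px R) he) (congr1 (@py R) he) (congr1 (@pz R) he) => /= ex ey ez.
rewrite /onpl => hA hB hD.
have hEz : pz E = ((pz A + s * (pz D - pz A)) - pz B) / t + pz B by rewrite ez; field.
have hEx : px E = ((px A + s * (px D - px A)) - px B) / t + px B by rewrite ex; field.
have hEy : py E = ((py A + s * (py D - py A)) - py B) / t + py B by rewrite ey; field.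
by rewrite hEz hEx hEy hA hB hD; field.
Qed.

Lemma plane_dual q e A B D : onpl q e A -> onpl q e B -> onpl q e D ->
  let N := cross (psub B A) (psub D A) in pz N != 0 ->
  (- px N / pz N, - py N / pz N) = q.
Proof.
case: q => q1 q2 hA hB hD N hN; rewrite /onpl /= in hA hB hD.
have hx : px N = - q1 * pz N by rewrite /N /= hA hB hD; ring.
have hy : py N = - q2 * pz N by rewrite /N /= hA hB hD; ring.
by rewrite hx hy; congr pair; field.
Qed.

Lemma plane_quad A B D E : convex_quad A B D E ->
  let N := cross (psub B A) (psub D A) in pz N != 0 ->
  let q := (- px N / pz N, - py N / pz N) in
  let e := pz A - q.1 * px A - q.2 * py A in
  [/\ onpl q e A, onpl q e B, onpl q e D & onpl q e E].
Proof.
case=> _ [s [t [hs [ht he]]]] N hN q e.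
have hA : onpl q e A by rewrite /onpl /e; ring.
have hB : onpl q e B by rewrite /onpl /e /q /N /=; field.
have hD : onpl q e D by rewrite /onpl /e /q /N /=; field.
split=> //.
have ht0 : t != 0 by case/andP: ht => h _; rewrite gt_eqF.
exact: (plane_D ht0 he hA hB hD).
Qed.

End S2.

Section S3.
Variable R : realType.
Implicit Types (A B C D E P Q : pt R).

Lemma lin_helper (a b x y : R) : a = b -> x - y = a - b -> x = y.
Proof. by move=> -> h; apply/eqP; rewrite -subr_eq0 h subrr. Qed.

Lemma cross_par (a b : R) (u w : pt R) : a * px w = b * px u -> a * py w = b * py u ->
  a * pz w = b * pz u -> (a != 0) || (b != 0) -> cross u w = pzero R.
Proof.
move=> hx hy hz /orP [ha|hb].
  rewrite [cross u w]ptE /pzero; congr (Pt _ _ _); apply/(mulfI ha); rewrite mulr0.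
  - have -> : a * px (cross u w) = py u * (a * pz w) - pz u * (a * py w) by rewrite /=; ring.
    by rewrite hy hz; ring.
  - have -> : a * py (cross u w) = pz u * (a * px w) - px u * (a * pz w) by rewrite /=; ring.
    by rewrite hx hz; ring.
  - have -> : a * pz (cross u w) = px u * (a * py w) - py u * (a * px w) by rewrite /=; ring.
    by rewrite hx hy; ring.
rewrite [cross u w]ptE /pzero; congr (Pt _ _ _); apply/(mulfI hb); rewrite mulr0.
- have -> : b * px (cross u w) = (b * py u) * pz w - (b * pz u) * py w by rewrite /=; ring.
  by rewrite -hy -hz; ring.
- have -> : b * py (cross u w) = (b * pz u) * px w - (b * px u) * pz w by rewrite /=; ring.
  by rewrite -hx -hz; ring.
- have -> : b * pz (cross u w) = (b * px u) * py w - (b * py u) * px w by rewrite /=; ring.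
  by rewrite -hx -hy; ring.
Qed.

Lemma dot0 (v : pt R) : dot v v = 0 -> px v = 0 /\ py v = 0 /\ pz v = 0.
Proof. by move=> h; apply: sq3. Qed.

Lemma eq_of_sub0 (x y : R) : x - y = 0 -> x = y.
Proof. by move/eqP; rewrite subr_eq0 => /eqP. Qed.

Lemma cq_edges A B D E : convex_quad A B D E ->
  [/\ dot (psub B A) (psub B A) != 0, dot (psub D B) (psub D B) != 0,
      dot (psub E A) (psub E A) != 0 & dot (psub D E) (psub D E) != 0].
Proof.
case=> hN [s [t [hs [ht he]]]].
move: (congr1 (@px R) he) (congr1 (@py R) he) (congr1 (@pz R) he) => /= ex ey ez.
have s0 : s != 0 by case/andP: hs => h _; rewrite gt_eqF.
have t1 : 1 - t != 0 by case/andP: ht => _ h; rewrite subr_eq0 eq_sym lt_eqF.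
split; apply/eqP => /dot0 [/eq_of_sub0 h1 [/eq_of_sub0 h2 /eq_of_sub0 h3]]; apply: hN.
- by rewrite /cross /psub /pzero /= h1 h2 h3; congr (Pt _ _ _); ring.
- by rewrite /cross /psub /pzero /= h1 h2 h3; congr (Pt _ _ _); ring.
- apply: (@cross_par s (1 - t)); rewrite ?s0 //=.
  + by apply: (lin_helper ex); rewrite h1; ring.
  + by apply: (lin_helper ey); rewrite h2; ring.
  + by apply: (lin_helper ez); rewrite h3; ring.
- apply: (@cross_par (s - t) (1 - t)); rewrite ?t1 ?orbT //=.
  + by apply: (lin_helper ex); rewrite -h1; ring.
  + by apply: (lin_helper ey); rewrite -h2; ring.
  + by apply: (lin_helper ez); rewrite -h3; ring.
Qed.

Lemma nv_core (nx ny nz ux uy uz wx wy wz lx ly lz : R) :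
  nx * ux + ny * uy + nz * uz = 0 -> nx * wx + ny * wy + nz * wz = 0 ->
  lx * ux + ly * uy + lz * uz = 0 -> lx * wx + ly * wy + lz * wz = 0 ->
  lz != 0 -> Pt nx ny nz <> pzero R ->
  Pt (uy * wz - uz * wy) (uz * wx - ux * wz) (ux * wy - uy * wx) <> pzero R ->
  nz != 0.
Proof.
move=> hnu hnw hlu hlw hl hn hX; apply/negP => /eqP hz.
set X1 := uy * wz - uz * wy; set X2 := uz * wx - ux * wz; set X3 := ux * wy - uy * wx.
have e1 : ny * X3 - nz * X2 = ux * (nx * wx + ny * wy + nz * wz) - wx * (nx * ux + ny * uy + nz * uz)
  by rewrite /X2 /X3; ring.
have e2 : nz * X1 - nx * X3 = uy * (nx * wx + ny * wy + nz * wz) - wy * (nx * ux + ny * uy + nz * uz)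
  by rewrite /X1 /X3; ring.
have f1 : ly * X3 - lz * X2 = ux * (lx * wx + ly * wy + lz * wz) - wx * (lx * ux + ly * uy + lz * uz)
  by rewrite /X2 /X3; ring.
have f2 : lz * X1 - lx * X3 = uy * (lx * wx + ly * wy + lz * wz) - wy * (lx * ux + ly * uy + lz * uz)
  by rewrite /X1 /X3; ring.
rewrite hnu hnw hz ?mulr0 ?mul0r ?subr0 ?sub0r in e1.
rewrite hnu hnw hz ?mulr0 ?mul0r ?subr0 ?sub0r in e2.
rewrite hlu hlw ?mulr0 ?subr0 in f1.
rewrite hlu hlw ?mulr0 ?subr0 in f2.
have [h3|h3] := eqVneq X3 0.
  rewrite h3 mulr0 sub0r in f1; rewrite h3 mulr0 subr0 in f2.
  move/eqP: f1; rewrite oppr_eq0 mulf_eq0 (negbTE hl) /= => /eqP h2.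
  move/eqP: f2; rewrite mulf_eq0 (negbTE hl) /= => /eqP h1.
  by apply: hX; rewrite -/X1 -/X2 -/X3 h1 h2 h3.
move/eqP: e1; rewrite mulf_eq0 (negbTE h3) orbF => /eqP hy.
move/eqP: e2; rewrite oppr_eq0 mulf_eq0 (negbTE h3) orbF => /eqP hx.
by apply: hn; rewrite hx hy hz.
Qed.

Lemma nonvert_face O v k (F : net R) a b :
  admissible_convex_4hedral v -> (k < 4)%N -> flat_plane_is_face O v k F a b ->
  face_normal F a b <> pzero R -> pz (face_normal F a b) != 0.
Proof.
case=> l [hfl [s hs]] hk [_ [h1 h2]] hN.
case: (hfl k hk) => hX [hl1 [hl2 _]].
have hlz : pz (l k) != 0.
  by apply/eqP => h0; move: (hs k hk); rewrite h0 mulr0 ltxx.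
move: hN h1 h2 hX hl1 hl2 hlz.
move: (face_normal F a b) (vk v k) (vk v k.+1) (l k) => [nx ny nz] [ux uy uz] [wx wy wz] [lx ly lz].
rewrite /dot /cross /= => hN h1 h2 hX hl1 hl2 hlz.
exact: (nv_core h1 h2 hl1 hl2 hlz hN hX).
Qed.

Lemma nonvert_all m n (F : net R) : dual_convex m n F ->
  forall i j, (i < m)%N -> (j < n)%N -> pz (face_normal F i j) != 0.
Proof.
case=> hm [hn [hnet hv]] i j hi hj.
have [hNz _] := hnet i j hi hj.
case: i hi hNz => [|i0] hi hNz; case: j hj hNz => [|j0] hj hNz.
- have [Oo [v [hadm [f0 _]]]] := hv 1%N 1%N (hm) (hn).
  exact: (nonvert_face hadm _ f0).
- have [Oo [v [hadm [_ [_ [_ f3]]]]]] := hv 1%N j0.+1 (hm) (hj).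
  exact: (nonvert_face hadm _ f3).
- have [Oo [v [hadm [_ [f1 _]]]]] := hv i0.+1 1%N (hi) (hn).
  exact: (nonvert_face hadm _ f1).
- have [Oo [v [hadm [_ [_ [f2 _]]]]]] := hv i0.+1 j0.+1 (hi) (hj).
  exact: (nonvert_face hadm _ f2).
Qed.

End S3.

Section S4.
Variable R : realType.
Implicit Types (A B D E P Q : pt R) (F G : net R).

Definition wit F F' a b (C : icong R) :=
  [/\ icong_apply C (F a b) = F' a b, icong_apply C (F a.+1 b) = F' a.+1 b,
      icong_apply C (F a.+1 b.+1) = F' a.+1 b.+1 & icong_apply C (F a b.+1) = F' a b.+1].

Lemma dual_top_img F F' a b C : wit F F' a b C -> pz (face_normal F a b) != 0 ->
  dual_top F' a b = rotp (cos (c_phi C)) (sin (c_phi C)) (addp (dual_top F a b) (cv C)) /\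
  pz (face_normal F' a b) = pz (face_normal F a b).
Proof.
case=> e1 e2 e3 _ hN.
rewrite /dual_top /face_normal -e1 -e2 -e3.
split; first exact: (@dual_img R C (F a b) (F a.+1 b) (F a.+1 b.+1) hN).
by case: (@cross_img R C (F a b) (F a.+1 b) (F a.+1 b.+1)).
Qed.

Lemma rot_agree (C C' : icong R) P Q (w1 w2 : R) :
  icong_apply C P = icong_apply C' P -> icong_apply C Q = icong_apply C' Q ->
  (px P - px Q) * w2 - (py P - py Q) * w1 != 0 ->
  cos (c_phi C) = cos (c_phi C') /\ sin (c_phi C) = sin (c_phi C').
Proof.
move=> eP eQ hw.
move: (congr1 (@px R) eP) (congr1 (@py R) eP) (congr1 (@px R) eQ) (congr1 (@py R) eQ).
rewrite /icong_apply /= => e1 e2 e3 e4.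
set a := cos (c_phi C) - cos (c_phi C'); set b := sin (c_phi C) - sin (c_phi C').
set ux := px P - px Q; set uy := py P - py Q.
have h1 : a * ux - b * uy = 0.
  have -> : a * ux - b * uy =
    ((cos (c_phi C) * px P - sin (c_phi C) * py P + px (c_b C)) -
     (cos (c_phi C) * px Q - sin (c_phi C) * py Q + px (c_b C))) -
    ((cos (c_phi C') * px P - sin (c_phi C') * py P + px (c_b C')) -
     (cos (c_phi C') * px Q - sin (c_phi C') * py Q + px (c_b C'))) by rewrite /a /b /ux /uy; ring.
  by rewrite e1 e3; ring.
have h2 : b * ux + a * uy = 0.
  have -> : b * ux + a * uy =
    ((sin (c_phi C) * px P + cos (c_phi C) * py P + py (c_b C)) -
     (sin (c_phi C) * px Q + cos (c_phi C) * py Q + py (c_b C))) -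
    ((sin (c_phi C') * px P + cos (c_phi C') * py P + py (c_b C')) -
     (sin (c_phi C') * px Q + cos (c_phi C') * py Q + py (c_b C'))) by rewrite /a /b /ux /uy; ring.
  by rewrite e2 e4; ring.
have hu : ux * ux + uy * uy != 0.
  apply/eqP => h0.
  have [hx [hy _]] : ux = 0 /\ uy = 0 /\ (0:R) = 0 by apply: sq3; rewrite mulr0 addr0.
  by move: hw; rewrite -/ux -/uy hx hy !mul0r subrr eqxx.
have ha : a * (ux * ux + uy * uy) = 0.
  have -> : a * (ux * ux + uy * uy) = ux * (a * ux - b * uy) + uy * (b * ux + a * uy) by ring.
  by rewrite h1 h2; ring.
have hb : b * (ux * ux + uy * uy) = 0.
  have -> : b * (ux * ux + uy * uy) = - uy * (a * ux - b * uy) + ux * (b * ux + a * uy) by ring.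
  by rewrite h1 h2; ring.
move/eqP: ha; rewrite mulf_eq0 (negbTE hu) orbF subr_eq0 => /eqP ->.
by move/eqP: hb; rewrite mulf_eq0 (negbTE hu) orbF subr_eq0 => /eqP ->.
Qed.

Lemma full_agree (C C' : icong R) P Q (w1 w2 : R) :
  icong_apply C P = icong_apply C' P -> icong_apply C Q = icong_apply C' Q ->
  (px P - px Q) * w2 - (py P - py Q) * w1 != 0 ->
  c_c1 C = c_c1 C' -> c_c2 C = c_c2 C' ->
  forall X, icong_apply C X = icong_apply C' X.
Proof.
move=> eP eQ hw h1 h2 X.
have [hc hs] := rot_agree eP eQ hw.
move: (congr1 (@px R) eP) (congr1 (@py R) eP) (congr1 (@pz R) eP).
rewrite /icong_apply /= => e1 e2 e3.
rewrite hc hs h1 h2 in e1 e2 e3.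
have bx : px (c_b C) = px (c_b C') by apply: (addrI _ e1).
have by_ : py (c_b C) = py (c_b C') by apply: (addrI _ e2).
have bz : pz (c_b C) = pz (c_b C') by apply: (addrI _ e3).
by rewrite /icong_apply hc hs h1 h2 bx by_ bz.
Qed.

Lemma curv_common F F' i0 j0 (C0 C1 C2 C3 : icong R) :
  wit F F' i0 j0 C0 -> wit F F' i0.+1 j0 C1 -> wit F F' i0.+1 j0.+1 C2 -> wit F F' i0 j0.+1 C3 ->
  pz (face_normal F i0 j0) != 0 -> pz (face_normal F i0.+1 j0) != 0 ->
  pz (face_normal F i0.+1 j0.+1) != 0 -> pz (face_normal F i0 j0.+1) != 0 ->
  curvature F' i0.+1 j0.+1 =
  Om (addp (dual_top F i0 j0) (cv C0)) (addp (dual_top F i0.+1 j0) (cv C1))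
     (addp (dual_top F i0.+1 j0.+1) (cv C2)) (addp (dual_top F i0 j0.+1) (cv C3)).
Proof.
move=> w0 w1 w2 w3 n0 n1 n2 n3.
have [d0 _] := dual_top_img w0 n0.
have [d1 _] := dual_top_img w1 n1.
have [d2 _] := dual_top_img w2 n2.
have [d3 _] := dual_top_img w3 n3.
case: w0 => a0 b0 c0 e0; case: w1 => a1 b1 c1 e1; case: w2 => a2 b2 c2 e2; case: w3 => a3 b3 c3 e3.
have [r01c r01s] : cos (c_phi C0) = cos (c_phi C1) /\ sin (c_phi C0) = sin (c_phi C1).
  apply: (@rot_agree _ _ (F i0.+1 j0.+1) (F i0.+1 j0) (px (F i0.+1 j0) - px (F i0 j0))
                                            (py (F i0.+1 j0) - py (F i0 j0))).
  - by rewrite c0 e1.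
  - by rewrite b0 a1.
  - have -> : (px (F i0.+1 j0.+1) - px (F i0.+1 j0)) * (py (F i0.+1 j0) - py (F i0 j0)) -
              (py (F i0.+1 j0.+1) - py (F i0.+1 j0)) * (px (F i0.+1 j0) - px (F i0 j0)) =
              - pz (face_normal F i0 j0) by rewrite /face_normal /=; ring.
    by rewrite oppr_eq0.
have [r12c r12s] : cos (c_phi C1) = cos (c_phi C2) /\ sin (c_phi C1) = sin (c_phi C2).
  apply: (@rot_agree _ _ (F i0.+2 j0.+1) (F i0.+1 j0.+1) (px (F i0.+2 j0.+2) - px (F i0.+1 j0.+1))
                                            (py (F i0.+2 j0.+2) - py (F i0.+1 j0.+1))).
  - by rewrite c1 b2.
  - by rewrite e1 a2.
  - exact: n2.
have [r23c r23s] : cos (c_phi C2) = cos (c_phi C3) /\ sin (c_phi C2) = sin (c_phi C3).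
  apply: (@rot_agree _ _ (F i0.+1 j0.+2) (F i0.+1 j0.+1) (px (F i0.+1 j0.+1) - px (F i0 j0.+1))
                                            (py (F i0.+1 j0.+1) - py (F i0 j0.+1))).
  - by rewrite e2 c3.
  - by rewrite a2 b3.
  - have -> : (px (F i0.+1 j0.+2) - px (F i0.+1 j0.+1)) * (py (F i0.+1 j0.+1) - py (F i0 j0.+1)) -
              (py (F i0.+1 j0.+2) - py (F i0.+1 j0.+1)) * (px (F i0.+1 j0.+1) - px (F i0 j0.+1)) =
              - pz (face_normal F i0 j0.+1) by rewrite /face_normal /=; ring.
    by rewrite oppr_eq0.
rewrite /curvature /= d0 d1 d2 d3 -r23c -r23s -r12c -r12s -r01c -r01s.
have := Om_rot (addp (dual_top F i0 j0) (cv C0)) (addp (dual_top F i0.+1 j0) (cv C1))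
     (addp (dual_top F i0.+1 j0.+1) (cv C2)) (addp (dual_top F i0 j0.+1) (cv C3)) (cos2Dsin2 (c_phi C0)).
by rewrite /Om.
Qed.

Lemma global F F' m n (k1 k2 : R) : (0 < m)%N -> (0 < n)%N ->
  (forall i j, (i < m)%N -> (j < n)%N -> pz (face_normal F i j) != 0) ->
  (forall i j, (i < m)%N -> (j < n)%N -> exists C, wit F F' i j C) ->
  (forall i j C, (i < m)%N -> (j < n)%N -> wit F F' i j C -> c_c1 C = k1 /\ c_c2 C = k2) ->
  exists Ec, forall i j, (i <= m)%N -> (j <= n)%N -> F' i j = icong_apply Ec (F i j).
Proof.
move=> hm hn hN hW hK.
have [Ec wE] := hW 0%N 0%N hm hn.
have [Ec1 Ec2] := hK _ _ _ hm hn wE.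
have claim0 : forall j, (j < n)%N -> forall C, wit F F' 0 j C -> forall X, icong_apply C X = icong_apply Ec X.
  elim=> [|j IH] hj C wC.
    have [C1 C2] := hK _ _ _ hm hn wC.
    case: wC => a b _ _; case: wE => a' b' _ _.
    apply: (@full_agree _ _ (F 1%N 0%N) (F 0%N 0%N) (px (F 1%N 1%N) - px (F 0%N 0%N))
                                            (py (F 1%N 1%N) - py (F 0%N 0%N))).
    - by rewrite b b'.
    - by rewrite a a'.
    - exact: (hN 0%N 0%N hm hn).
    - by rewrite C1 Ec1.
    - by rewrite C2 Ec2.
  have hj' : (j < n)%N by apply: ltnW.
  have [C0 w0] := hW 0%N j hm hj'.
  have IH0 := IH hj' C0 w0.
  have [C1 C2] := hK _ _ _ hm hj wC.
  have [C01 C02] := hK _ _ _ hm hj' w0.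
  move=> X; rewrite -IH0.
  case: wC => a b _ _; case: w0 => _ _ c' d'.
  apply: (@full_agree _ _ (F 1%N j.+1) (F 0%N j.+1) (px (F 1%N j.+2) - px (F 0%N j.+1))
                                            (py (F 1%N j.+2) - py (F 0%N j.+1))).
  - by rewrite b c'.
  - by rewrite a d'.
  - exact: (hN 0%N j.+1 hm hj).
  - by rewrite C1 C01.
  - by rewrite C2 C02.
have claim : forall i j, (i < m)%N -> (j < n)%N -> forall C, wit F F' i j C ->
    forall X, icong_apply C X = icong_apply Ec X.
  elim=> [|i IH] j hi hj C wC.
    exact: (claim0 j hj C wC).
  have hi' : (i < m)%N by apply: ltnW.
  have [C0 w0] := hW i j hi' hj.
  have IH0 := IH j hi' hj C0 w0.
  have [C1 C2] := hK _ _ _ hi hj wC.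
  have [C01 C02] := hK _ _ _ hi' hj w0.
  move=> X; rewrite -IH0.
  case: wC => a _ _ d; case: w0 => _ b' c' _.
  apply: (@full_agree _ _ (F i.+1 j.+1) (F i.+1 j) (px (F i.+1 j) - px (F i j))
                                            (py (F i.+1 j) - py (F i j))).
  - by rewrite d c'.
  - by rewrite a b'.
  - have -> : (px (F i.+1 j.+1) - px (F i.+1 j)) * (py (F i.+1 j) - py (F i j)) -
              (py (F i.+1 j.+1) - py (F i.+1 j)) * (px (F i.+1 j) - px (F i j)) =
              - pz (face_normal F i j) by rewrite /face_normal /=; ring.
    by rewrite oppr_eq0 hN.
  - by rewrite C1 C01.
  - by rewrite C2 C02.
exists Ec => i j hi hj.
case: m hm hN hW hK claim0 claim hi => // m _ hN hW hK _ claim hi.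
case: n hn hN hW hK claim hj => // n _ hN hW hK claim hj.
have [him|him] := ltnP i m.+1; have [hjn|hjn] := ltnP j n.+1.
- have [C wC] := hW i j him hjn.
  case: (wC) => a _ _ _; by rewrite -a (claim _ _ him hjn C wC).
- have ej : j = n.+1 by apply/eqP; rewrite eqn_leq hj hjn.
  rewrite ej.
  have [C wC] := hW i n him (ltnSn n).
  case: (wC) => _ _ _ d; by rewrite -d (claim _ _ him (ltnSn n) C wC).
- have ei : i = m.+1 by apply/eqP; rewrite eqn_leq hi him.
  rewrite ei.
  have [C wC] := hW m j (ltnSn m) hjn.
  case: (wC) => _ b _ _; by rewrite -b (claim _ _ (ltnSn m) hjn C wC).
- have ei : i = m.+1 by apply/eqP; rewrite eqn_leq hi him.
  have ej : j = n.+1 by apply/eqP; rewrite eqn_leq hj hjn.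
  rewrite ei ej.
  have [C wC] := hW m n (ltnSn m) (ltnSn n).
  case: (wC) => _ _ c _; by rewrite -c (claim _ _ (ltnSn m) (ltnSn n) C wC).
Qed.

End S4.

Section Common.
Variable R : realType.

Definition ratp (u f : pt R) := dot u f / dot f f.

Lemma par_ratio (u f : pt R) : parallel u f -> dot f f != 0 ->
  [/\ px u = ratp u f * px f, py u = ratp u f * py f & pz u = ratp u f * pz f].
Proof.
move=> hp hf.
move: (congr1 (@px R) hp) (congr1 (@py R) hp) (congr1 (@pz R) hp) => X1 X2 X3.
have ex : px u * dot f f = px f * dot u f.
  apply: eq_of_sub0.
  have -> : px u * dot f f - px f * dot u f = py f * pz (cross u f) - pz f * py (cross u f)
    by rewrite /dot /=; ring.
  by rewrite X2 X3 /= !mulr0 subrr.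
have ey : py u * dot f f = py f * dot u f.
  apply: eq_of_sub0.
  have -> : py u * dot f f - py f * dot u f = pz f * px (cross u f) - px f * pz (cross u f)
    by rewrite /dot /=; ring.
  by rewrite X1 X3 /= !mulr0 subrr.
have ez : pz u * dot f f = pz f * dot u f.
  apply: eq_of_sub0.
  have -> : pz u * dot f f - pz f * dot u f = px f * py (cross u f) - py f * px (cross u f)
    by rewrite /dot /=; ring.
  by rewrite X1 X2 /= !mulr0 subrr.
rewrite /ratp; split.
- by rewrite -[LHS](mulfK hf) ex; field.
- by rewrite -[LHS](mulfK hf) ey; field.
- by rewrite -[LHS](mulfK hf) ez; field.
Qed.

Lemma lin2 (a1 a2 ux uy wx wy : R) : a1 * ux + a2 * uy = 0 -> a1 * wx + a2 * wy = 0 ->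
  ux * wy - uy * wx != 0 -> a1 = 0 /\ a2 = 0.
Proof.
move=> h1 h2 hw.
have e1 : a1 * (ux * wy - uy * wx) = wy * (a1 * ux + a2 * uy) - uy * (a1 * wx + a2 * wy) by ring.
have e2 : a2 * (ux * wy - uy * wx) = ux * (a1 * wx + a2 * wy) - wx * (a1 * ux + a2 * uy) by ring.
rewrite h1 h2 !mulr0 subrr in e1 e2.
move/eqP: e1; rewrite mulf_eq0 (negbTE hw) orbF => /eqP ->.
by move/eqP: e2; rewrite mulf_eq0 (negbTE hw) orbF => /eqP ->.
Qed.

Lemma wit_of (F F' : net R) a b C :
  icong_apply C (F a b) = F' a b /\ icong_apply C (F a.+1 b) = F' a.+1 b /\
  icong_apply C (F a.+1 b.+1) = F' a.+1 b.+1 /\ icong_apply C (F a b.+1) = F' a b.+1 ->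
  wit F F' a b C.
Proof. by case=> a1 [a2 [a3 a4]]; split. Qed.

Lemma cq_wit (F F' : net R) a b C : wit F F' a b C ->
  convex_quad (F a b) (F a.+1 b) (F a.+1 b.+1) (F a b.+1) ->
  convex_quad (F' a b) (F' a.+1 b) (F' a.+1 b.+1) (F' a b.+1).
Proof. by case=> <- <- <- <-; apply: cq_img. Qed.

Lemma wcB (f : R -> R) (k : R) : {within `[0%R, 1%R], continuous f}%classic ->
  {within `[0%R, 1%R], continuous (fun t => f t - k)}%classic.
Proof. by move=> hf; apply: wcD => //; apply: wcC. Qed.

End Common.

Section Comb.
Variable R : realType.
Variables (m n : nat) (F G : net R) (Fam : R -> net R).
Hypothesis hF : dual_convex m n F.
Hypothesis hG : dual_convex m n G.
Hypothesis hC : combescure m n F G.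
Hypothesis fam0 : forall i j, (i <= m)%N -> (j <= n)%N -> Fam 0 i j = F i j.
Hypothesis famW : forall t, 0 <= t <= 1 -> forall i j, (i < m)%N -> (j < n)%N ->
  exists C, wit F (Fam t) i j C.

Definition dl t i j := pz (Fam t i j) - pz (F i j).
Definition ehG i j := psub (G i.+1 j) (G i j).
Definition evG i j := psub (G i j.+1) (G i j).
Definition ehF i j := psub (F i.+1 j) (F i j).
Definition evF i j := psub (F i j.+1) (F i j).
Definition lh i j := ratp (ehG i j) (ehF i j).
Definition lv i j := ratp (evG i j) (evF i j).
Fixpoint Hr t i := match i with 0%N => 0 | i'.+1 => Hr t i' + lh i' 0 * (dl t i'.+1 0 - dl t i' 0) end.
Fixpoint Hc t i j := match j with 0%N => Hr t i | j'.+1 => Hc t i j' + lv i j' * (dl t i j'.+1 - dl t i j') end.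
Definition Gt t i j := Pt (px (G i j)) (py (G i j)) (pz (G i j) + Hc t i j).

Lemma pair_eq2 (a b c d : R) : a = c -> b = d -> (a, b) = (c, d).
Proof. by move=> -> ->. Qed.

Definition dc (C : icong R) (v : pt R) := c_c1 C * px v + c_c2 C * py v.

Lemma edge_incr (C : icong R) (FP FQ FP' FQ' GP GQ : pt R) :
  icong_apply C FP = FP' -> icong_apply C FQ = FQ' ->
  parallel (psub GQ GP) (psub FQ FP) -> dot (psub FQ FP) (psub FQ FP) != 0 ->
  ratp (psub GQ GP) (psub FQ FP) * ((pz FQ' - pz FQ) - (pz FP' - pz FP)) = dc C (psub GQ GP).
Proof.
move=> <- <- hp hf.
have [ex ey _] := par_ratio hp hf.
rewrite /dc ex ey /icong_apply /=; ring.
Qed.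

Lemma Fnet : is_net m n F. Proof. by case: hF => _ [_ []]. Qed.
Lemma Gnet : is_net m n G. Proof. by case: hG => _ [_ []]. Qed.

Lemma face_incr t i j C : (i < m)%N -> (j < n)%N -> wit F (Fam t) i j C ->
  [/\ lh i j * (dl t i.+1 j - dl t i j) = dc C (ehG i j),
      lv i.+1 j * (dl t i.+1 j.+1 - dl t i.+1 j) = dc C (evG i.+1 j),
      lv i j * (dl t i j.+1 - dl t i j) = dc C (evG i j) &
      lh i j.+1 * (dl t i.+1 j.+1 - dl t i j.+1) = dc C (ehG i j.+1)].
Proof.
move=> hi hj [a b c d].
have [e1 e2 e3 e4] := cq_edges (Fnet hi hj).
case: hC => hh hv.
split.
- exact: (edge_incr a b (hh i j hi (ltnW hj)) e1).
- exact: (edge_incr b c (hv i.+1 j hi hj) e2).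
- exact: (edge_incr a d (hv i j (ltnW hi) hj) e3).
- exact: (edge_incr d c (hh i j.+1 hi hj) e4).
Qed.

Lemma Hc_h t : 0 <= t <= 1 -> forall i j, (i < m)%N -> (j <= n)%N ->
  Hc t i.+1 j - Hc t i j = lh i j * (dl t i.+1 j - dl t i j).
Proof.
move=> ht i; elim=> [|j IH] hi hj.
  by rewrite /=; ring.
have hj' : (j < n)%N by exact: hj.
have [C wC] := famW ht hi hj'.
have [f1 f2 f3 f4] := face_incr hi hj' wC.
have IH' := IH hi (ltnW hj').
rewrite /= f4.
have -> : Hc t i.+1 j + lv i.+1 j * (dl t i.+1 j.+1 - dl t i.+1 j) -
    (Hc t i j + lv i j * (dl t i j.+1 - dl t i j)) =
    (Hc t i.+1 j - Hc t i j) + lv i.+1 j * (dl t i.+1 j.+1 - dl t i.+1 j) -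
    lv i j * (dl t i j.+1 - dl t i j) by ring.
rewrite IH' f1 f2 f3 /dc /ehG /evG /=; ring.
Qed.

Definition Cg t i j (C : icong R) :=
  ICong 0 (c_c1 C) (c_c2 C) (Pt 0 0 (Hc t i j - c_c1 C * px (G i j) - c_c2 C * py (G i j))).

Lemma Gt_wit t i j C : 0 <= t <= 1 -> (i < m)%N -> (j < n)%N -> wit F (Fam t) i j C ->
  wit G (Gt t) i j (Cg t i j C).
Proof.
move=> ht hi hj wC.
have [f1 f2 f3 f4] := face_incr hi hj wC.
have hB : Hc t i.+1 j = Hc t i j + dc C (ehG i j).
  by rewrite -f1 -(Hc_h ht hi (ltnW hj)); ring.
have hD : Hc t i j.+1 = Hc t i j + dc C (evG i j) by rewrite /= f3.
have hCc : Hc t i.+1 j.+1 = Hc t i.+1 j + dc C (evG i.+1 j) by rewrite /= f2.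
split; rewrite /icong_apply /Gt /Cg ?hCc ?hB ?hD /= cos0 sin0 /dc /ehG /evG /=;
  congr (Pt _ _ _); ring.
Qed.

Lemma dual_top_comb i j : (i < m)%N -> (j < n)%N -> dual_top G i j = dual_top F i j.
Proof.
move=> hi hj.
have [e1 e2 _ _] := cq_edges (Fnet hi hj).
case: hC => hh hv.
have [ax ay az] := par_ratio (hh i j hi (ltnW hj)) e1.
have [bx by_ bz] := par_ratio (hv i.+1 j hi hj) e2.
rewrite -/(ehG i j) -/(ehF i j) -/(lh i j) in ax ay az.
rewrite -/(evG i.+1 j) -/(evF i.+1 j) -/(lv i.+1 j) in bx by_ bz.
have gBx : px (G i.+1 j) = px (G i j) + lh i j * px (ehF i j) by rewrite -ax /ehG /=; ring.
have gBy : py (G i.+1 j) = py (G i j) + lh i j * py (ehF i j) by rewrite -ay /ehG /=; ring.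
have gBz : pz (G i.+1 j) = pz (G i j) + lh i j * pz (ehF i j) by rewrite -az /ehG /=; ring.
have gCx : px (G i.+1 j.+1) = px (G i.+1 j) + lv i.+1 j * px (evF i.+1 j) by rewrite -bx /evG /=; ring.
have gCy : py (G i.+1 j.+1) = py (G i.+1 j) + lv i.+1 j * py (evF i.+1 j) by rewrite -by_ /evG /=; ring.
have gCz : pz (G i.+1 j.+1) = pz (G i.+1 j) + lv i.+1 j * pz (evF i.+1 j) by rewrite -bz /evG /=; ring.
have hN : forall (k : pt R -> R), k = (@px R) \/ k = (@py R) \/ k = (@pz R) ->
   k (face_normal G i j) = lh i j * lv i.+1 j * k (face_normal F i j).
  move=> k [->|[->|->]]; rewrite /face_normal /= ?gCx ?gCy ?gCz ?gBx ?gBy ?gBz /ehF /evF /=; ring.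
have hGz := nonvert_all hG hi hj.
have hl : lh i j * lv i.+1 j != 0.
  by apply: contraNneq hGz; rewrite (hN _ (or_intror (or_intror erefl))) => ->; rewrite mul0r.
have hFz : pz (face_normal F i j) != 0 by apply: contraNneq hGz; rewrite (hN _ (or_intror (or_intror erefl))) => ->; rewrite mulr0.
rewrite /dual_top; cbv zeta; rewrite (hN _ (or_introl erefl)) (hN _ (or_intror (or_introl erefl)))
  (hN _ (or_intror (or_intror erefl))).
have /andP [hl1 hl2] : (lh i j != 0) && (lv i.+1 j != 0) by rewrite -negb_or -mulf_eq0.
by apply: pair_eq2; field; rewrite hFz hl1 hl2.
Qed.


Hypothesis famC : forall i j, (i <= m)%N -> (j <= n)%N ->
  {within `[0%R, 1%R], continuous (fun t : R => pz (Fam t i j))}%classic.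
Hypothesis famK : forall t, 0 <= t <= 1 -> forall i j, (1 <= i < m)%N -> (1 <= j < n)%N ->
  curvature (Fam t) i j = curvature F i j.
Hypothesis famNT : ~ (forall t, 0 <= t <= 1 -> exists C : icong R,
  forall i j, (i <= m)%N -> (j <= n)%N -> Fam t i j = icong_apply C (F i j)).

Lemma cont_dl i j : (i <= m)%N -> (j <= n)%N ->
  {within `[0%R, 1%R], continuous (fun t : R => dl t i j)}%classic.
Proof. by move=> hi hj; rewrite /dl; apply: wcB; apply: famC. Qed.

Lemma cont_Hr i : (i <= m)%N -> {within `[0%R, 1%R], continuous (fun t : R => Hr t i)}%classic.
Proof.
elim: i => [|i IH] hi /=; first exact: wcC.
apply: wcD; first exact: IH (ltnW hi).
apply: wcM; first exact: wcC.
apply: wcD; first exact: cont_dl.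
by apply: wcN; apply: cont_dl => //; apply: ltnW.
Qed.

Lemma cont_Hc i j : (i <= m)%N -> (j <= n)%N ->
  {within `[0%R, 1%R], continuous (fun t : R => Hc t i j)}%classic.
Proof.
move=> hi; elim: j => [|j IH] hj /=; first exact: cont_Hr.
apply: wcD; first exact: IH (ltnW hj).
apply: wcM; first exact: wcC.
apply: wcD; first exact: cont_dl.
by apply: wcN; apply: cont_dl => //; apply: ltnW.
Qed.

Lemma dl0 i j : (i <= m)%N -> (j <= n)%N -> dl 0 i j = 0.
Proof. by move=> hi hj; rewrite /dl fam0 // subrr. Qed.

Lemma Hr0 i : (i <= m)%N -> Hr 0 i = 0.
Proof.
elim: i => [|i IH] hi //=.
by rewrite IH ?(ltnW hi) // !dl0 // ?(ltnW hi) // subrr mulr0 addr0.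
Qed.

Lemma Hc0 i j : (i <= m)%N -> (j <= n)%N -> Hc 0 i j = 0.
Proof.
move=> hi; elim: j => [|j IH] hj /=; first exact: Hr0.
by rewrite IH ?(ltnW hj) // !dl0 // ?(ltnW hj) // subrr mulr0 addr0.
Qed.

Lemma Gt0 i j : (i <= m)%N -> (j <= n)%N -> Gt 0 i j = G i j.
Proof. by move=> hi hj; rewrite /Gt Hc0 // addr0 -ptE. Qed.

Lemma Hc_face t i j C : 0 <= t <= 1 -> (i < m)%N -> (j < n)%N -> wit F (Fam t) i j C ->
  [/\ Hc t i.+1 j = Hc t i j + dc C (ehG i j),
      Hc t i j.+1 = Hc t i j + dc C (evG i j) &
      Hc t i.+1 j.+1 = Hc t i.+1 j + dc C (evG i.+1 j)].
Proof.
move=> ht hi hj wC.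
have [f1 f2 f3 f4] := face_incr hi hj wC.
split; last by rewrite /= f2.
  by rewrite -f1 -(Hc_h ht hi (ltnW hj)); ring.
by rewrite /= f3.
Qed.

Lemma Gcurv t i j : 0 <= t <= 1 -> (1 <= i < m)%N -> (1 <= j < n)%N ->
  curvature (Gt t) i j = curvature G i j.
Proof.
move=> ht; case: i => [|i] // hi; case: j => [|j] // hj.
have hi1 : (i.+1 < m)%N by exact: hi.
have hj1 : (j.+1 < n)%N by exact: hj.
have hi0 : (i < m)%N by apply: ltnW.
have hj0 : (j < n)%N by apply: ltnW.
have [C0 w0] := famW ht hi0 hj0.
have [C1 w1] := famW ht hi1 hj0.
have [C2 w2] := famW ht hi1 hj1.
have [C3 w3] := famW ht hi0 hj1.
have eF := curv_common w0 w1 w2 w3 (nonvert_all hF hi0 hj0) (nonvert_all hF hi1 hj0)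
  (nonvert_all hF hi1 hj1) (nonvert_all hF hi0 hj1).
have eG := curv_common (Gt_wit ht hi0 hj0 w0) (Gt_wit ht hi1 hj0 w1) (Gt_wit ht hi1 hj1 w2)
  (Gt_wit ht hi0 hj1 w3) (nonvert_all hG hi0 hj0) (nonvert_all hG hi1 hj0)
  (nonvert_all hG hi1 hj1) (nonvert_all hG hi0 hj1).
have eGF : curvature G i.+1 j.+1 = curvature F i.+1 j.+1.
  by rewrite /curvature /= (dual_top_comb hi0 hj0) (dual_top_comb hi1 hj0)
    (dual_top_comb hi1 hj1) (dual_top_comb hi0 hj1).
rewrite eG eGF -(famK ht hi hj) eF.
rewrite (dual_top_comb hi0 hj0) (dual_top_comb hi1 hj0) (dual_top_comb hi1 hj1) (dual_top_comb hi0 hj1).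
by [].
Qed.

Lemma Gnontriv : ~ (forall t, 0 <= t <= 1 -> exists C : icong R,
  forall i j, (i <= m)%N -> (j <= n)%N -> Gt t i j = icong_apply C (G i j)).
Proof.
move=> H; apply: famNT => t ht.
have [D hD] := H t ht.
have [hm [hn _]] := hF.
have hm0 : (0 < m)%N by apply: leq_trans hm.
have hn0 : (0 < n)%N by apply: leq_trans hn.
apply: (@global _ F (Fam t) m n (c_c1 D) (c_c2 D) hm0 hn0 (nonvert_all hF) (famW ht)).
move=> i j C hi hj wC.
have [hB _ hCc] := Hc_face ht hi hj wC.
have zA := congr1 (@pz R) (hD i j (ltnW hi) (ltnW hj)).
have zB := congr1 (@pz R) (hD i.+1 j hi (ltnW hj)).
have zC := congr1 (@pz R) (hD i.+1 j.+1 hi hj).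
rewrite /Gt /icong_apply /= in zA zB zC.
have eq1 : (c_c1 C - c_c1 D) * px (ehG i j) + (c_c2 C - c_c2 D) * py (ehG i j) = 0.
  have -> : (c_c1 C - c_c1 D) * px (ehG i j) + (c_c2 C - c_c2 D) * py (ehG i j) =
    ((pz (G i.+1 j) + Hc t i.+1 j) - (c_c1 D * px (G i.+1 j) + c_c2 D * py (G i.+1 j) + pz (G i.+1 j) + pz (c_b D))) -
    ((pz (G i j) + Hc t i j) - (c_c1 D * px (G i j) + c_c2 D * py (G i j) + pz (G i j) + pz (c_b D)))
    by rewrite hB /dc /ehG /=; ring.
  by rewrite zA zB; ring.
have eq2 : (c_c1 C - c_c1 D) * px (evG i.+1 j) + (c_c2 C - c_c2 D) * py (evG i.+1 j) = 0.
  have -> : (c_c1 C - c_c1 D) * px (evG i.+1 j) + (c_c2 C - c_c2 D) * py (evG i.+1 j) =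
    ((pz (G i.+1 j.+1) + Hc t i.+1 j.+1) - (c_c1 D * px (G i.+1 j.+1) + c_c2 D * py (G i.+1 j.+1) + pz (G i.+1 j.+1) + pz (c_b D))) -
    ((pz (G i.+1 j) + Hc t i.+1 j) - (c_c1 D * px (G i.+1 j) + c_c2 D * py (G i.+1 j) + pz (G i.+1 j) + pz (c_b D)))
    by rewrite hCc /dc /evG /=; ring.
  by rewrite zB zC; ring.
have hw : px (ehG i j) * py (evG i.+1 j) - py (ehG i j) * px (evG i.+1 j) != 0.
  have -> : px (ehG i j) * py (evG i.+1 j) - py (ehG i j) * px (evG i.+1 j) = pz (face_normal G i j)
    by rewrite /ehG /evG /face_normal /=; ring.
  have := nonvert_all hG hi hj. done.
have [a1 a2] := lin2 eq1 eq2 hw.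
by split; apply: eq_of_sub0.
Qed.

Lemma comb_flex : flexible m n G.
Proof.
exists Gt; split; first exact: Gt0.
split.
  move=> t ht i j hi hj; have [C wC] := famW ht hi hj.
  exact: (cq_wit (Gt_wit ht hi hj wC) (Gnet hi hj)).
split.
  move=> i j hi hj; split; first exact: wcC.
  split; first exact: wcC.
  by rewrite /Gt /=; apply: wcD; [exact: wcC | exact: cont_Hc].
split.
  move=> t ht i j hi hj; have [C wC] := famW ht hi hj.
  exists (Cg t i j C); case: (Gt_wit ht hi hj wC) => a b c d; by do !split.
split.
  move=> t ht i j hi hj; have := Gcurv ht hi hj; done.
exact: Gnontriv.
Qed.

End Comb.

Section Mat.
Variable R : realType.
Variable M : 'M[R]_4.
Variable c : R.
Hypothesis hMu : M \in unitmx.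
Hypothesis hMc : M *m ez R = c *: ez R.

Definition Ni := invmx M.

Definition rowv (a b d e : R) : 'rV[R]_4 :=
  \row_(k < 4) (match val k with 0 => a | 1 => b | 2 => d | _ => e end).

Lemma rowvE a b d e : [/\ rowv a b d e 0 0 = a, rowv a b d e 0 1%:R = b,
  rowv a b d e 0 2%:R = d & rowv a b d e 0 3%:R = e].
Proof. by rewrite !mxE. Qed.

Lemma mulrc (r : 'rV[R]_4) (v : 'cV[R]_4) :
  (r *m v) 0 0 = r 0 0 * v 0 0 + r 0 1%:R * v 1%:R 0 + r 0 2%:R * v 2%:R 0 + r 0 3%:R * v 3%:R 0.
Proof. by rewrite mxE sum4. Qed.

Lemma mulcol (A : 'M[R]_4) (v : 'cV[R]_4) k :
  (A *m v) k 0 = A k 0 * v 0 0 + A k 1%:R * v 1%:R 0 + A k 2%:R * v 2%:R 0 + A k 3%:R * v 3%:R 0.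
Proof. by rewrite mxE sum4. Qed.

Lemma mulrow (r : 'rV[R]_4) (A : 'M[R]_4) k :
  (r *m A) 0 k = r 0 0 * A 0 k + r 0 1%:R * A 1%:R k + r 0 2%:R * A 2%:R k + r 0 3%:R * A 3%:R k.
Proof. by rewrite mxE sum4. Qed.

Lemma ezE : [/\ ez R 0 0 = 0, ez R 1%:R 0 = 0, ez R 2%:R 0 = 1 & ez R 3%:R 0 = 0].
Proof. by rewrite !mxE. Qed.

Lemma Mcol2 : [/\ M 0 2%:R = 0, M 1%:R 2%:R = 0, M 2%:R 2%:R = c & M 3%:R 2%:R = 0].
Proof.
have [z0 z1 z2 z3] := ezE.
have e k : M k 2%:R = c * ez R k 0.
  have := congr1 (fun A : 'M[R]_(4,1) => A k 0) hMc; rewrite /= mulcol z0 z1 z2 z3 mxE.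
  by move=> <-; ring.
by rewrite !e z0 z1 z2 z3 !mulr0 mulr1.
Qed.

Lemma NM : Ni *m M = 1%:M.
Proof. exact: mulVmx. Qed.

Lemma NMez : ez R = c *: (Ni *m ez R).
Proof. by rewrite scalemxAr -hMc mulmxA NM mul1mx. Qed.

Lemma c_neq0 : c != 0.
Proof.
apply/eqP => c0; have := congr1 (fun A : 'M[R]_(4,1) => A 2%:R 0) NMez.
by rewrite c0 scale0r /= !mxE /=; move/eqP; rewrite oner_eq0.
Qed.

Lemma Ncol2 k : Ni k 2%:R = c^-1 * ez R k 0.
Proof.
have e : Ni *m ez R = c^-1 *: ez R.
  by rewrite {2}NMez scalerA mulVf ?c_neq0 // scale1r.
have := congr1 (fun A : 'M[R]_(4,1) => A k 0) e.
have [z0 z1 z2 z3] := ezE.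
rewrite /= mulcol z0 z1 z2 z3 mxE => <-; ring.
Qed.

Lemma row_trick (f : 'rV[R]_4) (P : pt R) :
  let g := f *m Ni in let h := M *m Defs.hom P in
  (f *m Defs.hom P) 0 0 = g 0 0 * h 0 0 + g 0 1%:R * h 1%:R 0 + g 0 2%:R * h 2%:R 0 + g 0 3%:R * h 3%:R 0 /\
  g 0 2%:R = f 0 2%:R / c.
Proof.
move=> g h; split.
  by rewrite -mulrc /g /h mulmxA -[f *m Ni *m M]mulmxA NM mulmx1.
have [z0 z1 z2 z3] := ezE.
rewrite /g mulrow !Ncol2 z0 z1 z2 z3; ring.
Qed.

Lemma hE (P : pt R) : let h := M *m Defs.hom P in
  [/\ h 0 0 = M 0 0 * px P + M 0 1%:R * py P + M 0 3%:R,
      h 1%:R 0 = M 1%:R 0 * px P + M 1%:R 1%:R * py P + M 1%:R 3%:R,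
      h 2%:R 0 = M 2%:R 0 * px P + M 2%:R 1%:R * py P + c * pz P + M 2%:R 3%:R &
      h 3%:R 0 = M 3%:R 0 * px P + M 3%:R 1%:R * py P + M 3%:R 3%:R].
Proof.
move=> h; have [m0 m1 m2 m3] := Mcol2; have [h0 [h1 [h2 h3]]] := homE P.
by rewrite /h !mulcol h0 h1 h2 h3 m0 m1 m2 m3; split; ring.
Qed.

End Mat.

Section DA.
Variable R : realType.
Variables (m n : nat) (F G : net R) (Fam : R -> net R) (M : 'M[R]_4) (c : R).
Hypothesis hF : dual_convex m n F.
Hypothesis hG : dual_convex m n G.
Hypothesis hMu : M \in unitmx.
Hypothesis hMc : M *m ez R = c *: ez R.

Definition projrel (Q P : pt R) := let h := M *m Defs.hom Q in
  h 3%:R 0 != 0 /\ P = Pt (h 0 0 / h 3%:R 0) (h 1%:R 0 / h 3%:R 0) (h 2%:R 0 / h 3%:R 0).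

Hypothesis hMG : forall i j, (i <= m)%N -> (j <= n)%N -> projrel (F i j) (G i j).
Hypothesis fam0 : forall i j, (i <= m)%N -> (j <= n)%N -> Fam 0 i j = F i j.
Hypothesis famW : forall t, 0 <= t <= 1 -> forall i j, (i < m)%N -> (j < n)%N ->
  exists C, wit F (Fam t) i j C.
Hypothesis famC : forall i j, (i <= m)%N -> (j <= n)%N ->
  {within `[0%R, 1%R], continuous (fun t : R => pz (Fam t i j))}%classic.
Hypothesis famK : forall t, 0 <= t <= 1 -> forall i j, (1 <= i < m)%N -> (1 <= j < n)%N ->
  curvature (Fam t) i j = curvature F i j.
Hypothesis famNT : ~ (forall t, 0 <= t <= 1 -> exists C : icong R,
  forall i j, (i <= m)%N -> (j <= n)%N -> Fam t i j = icong_apply C (F i j)).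

Definition dla t i j := pz (Fam t i j) - pz (F i j).
Definition wv i j := (M *m Defs.hom (F i j)) 3%:R 0.
Definition Ga t i j := Pt (px (G i j)) (py (G i j)) (pz (G i j) + c * dla t i j / wv i j).
Definition Fv t i j := Pt (px (F i j)) (py (F i j)) (pz (F i j) + dla t i j).

Lemma Fnet' : is_net m n F. Proof. by case: hF => _ [_ []]. Qed.
Lemma Gnet' : is_net m n G. Proof. by case: hG => _ [_ []]. Qed.

Lemma dla_of t a b (C : icong R) : icong_apply C (F a b) = Fam t a b ->
  dla t a b = c_c1 C * px (F a b) + c_c2 C * py (F a b) + pz (c_b C).
Proof. by move=> e; rewrite /dla -e /icong_apply /=; ring. Qed.

Lemma projFv t a b : (a <= m)%N -> (b <= n)%N -> projrel (Fv t a b) (Ga t a b).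
Proof.
move=> ha hb; have [hz hGe] := hMG ha hb.
have [e0 e1 e2 e3] := hE hMc (Fv t a b).
have [f0 f1 f2 f3] := hE hMc (F a b).
rewrite /projrel e0 e1 e2 e3 /=.
rewrite f3 in hz.
split; first by [].
rewrite /Ga /wv hGe f0 f1 f2 f3 /=.
by congr (Pt _ _ _); field.
Qed.

Definition Cda (C : icong R) :=
  let g := rowv (c * c_c1 C) (c * c_c2 C) 0 (c * pz (c_b C)) *m Ni M in
  ICong 0 (g 0 0) (g 0 1%:R) (Pt 0 0 (g 0 3%:R)).

Lemma Ga_corner t a b (C : icong R) : (a <= m)%N -> (b <= n)%N ->
  icong_apply C (F a b) = Fam t a b -> icong_apply (Cda C) (G a b) = Ga t a b.
Proof.
move=> ha hb e.
have hd := dla_of e.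
have [hz hGe] := hMG ha hb.
set f := rowv (c * c_c1 C) (c * c_c2 C) 0 (c * pz (c_b C)).
have [rt g2] := row_trick hMu hMc f (F a b).
have [r0 r1 r2 r3] := rowvE (c * c_c1 C) (c * c_c2 C) 0 (c * pz (c_b C)).
have [h0 [h1 [h2 h3]]] := homE (F a b).
have lhs : (f *m Defs.hom (F a b)) 0 0 = c * dla t a b.
  by rewrite mulrc /f r0 r1 r2 r3 h0 h1 h2 h3 hd; ring.
rewrite /f r2 mul0r in g2.
rewrite lhs g2 mul0r addr0 in rt.
rewrite /icong_apply /Ga /Cda -/f /= cos0 sin0 /wv.
move: hz rt; rewrite hGe /=.
set H0 := (M *m Defs.hom (F a b)) 0 0.
set H1 := (M *m Defs.hom (F a b)) 1%:R 0.
set H3 := (M *m Defs.hom (F a b)) 3%:R 0.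
move=> hz rt.
congr (Pt _ _ _); try ring.
by rewrite rt; field.
Qed.

Lemma Ga_wit t a b C : (a < m)%N -> (b < n)%N -> wit F (Fam t) a b C ->
  wit G (Ga t) a b (Cda C).
Proof.
move=> ha hb [e1 e2 e3 e4]; split; apply: Ga_corner => //; by apply: ltnW.
Qed.

Definition Cs (C : icong R) := ICong 0 (c_c1 C) (c_c2 C) (Pt 0 0 (pz (c_b C))).

Lemma Fv_wit t a b C : wit F (Fam t) a b C -> wit F (Fv t) a b (Cs C).
Proof.
case=> e1 e2 e3 e4; split;
  [move: e1 | move: e2 | move: e3 | move: e4] => /dla_of hd;
  by rewrite /icong_apply /Fv /Cs /= cos0 sin0 hd; congr (Pt _ _ _); ring.
Qed.

Lemma cont_dla i j : (i <= m)%N -> (j <= n)%N ->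
  {within `[0%R, 1%R], continuous (fun t : R => dla t i j)}%classic.
Proof. by move=> hi hj; rewrite /dla; apply: wcB; apply: famC. Qed.

Lemma Ga0 i j : (i <= m)%N -> (j <= n)%N -> Ga 0 i j = G i j.
Proof. by move=> hi hj; rewrite /Ga /dla fam0 // subrr mulr0 mul0r addr0 -ptE. Qed.

Definition aff (a11 a12 a21 a22 t1 t2 : R) (q : R * R) :=
  (a11 * q.1 + a12 * q.2 + t1, a21 * q.1 + a22 * q.2 + t2).

Lemma Om_aff a11 a12 a21 a22 t1 t2 q0 q1 q2 q3 :
  Om (aff a11 a12 a21 a22 t1 t2 q0) (aff a11 a12 a21 a22 t1 t2 q1)
     (aff a11 a12 a21 a22 t1 t2 q2) (aff a11 a12 a21 a22 t1 t2 q3) =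
  (a11 * a22 - a12 * a21) * Om q0 q1 q2 q3.
Proof.
case: q0 => x0 y0; case: q1 => x1 y1; case: q2 => x2 y2; case: q3 => x3 y3.
by rewrite /Om /aff /det2 /=; ring.
Qed.

Definition affV (V : pt R) :=
  let N := Ni M in
  aff (c * (N 0 0 - px V * N 3%:R 0)) (c * (N 1%:R 0 - py V * N 3%:R 0))
      (c * (N 0 1%:R - px V * N 3%:R 1%:R)) (c * (N 1%:R 1%:R - py V * N 3%:R 1%:R))
      (c * (pz V * N 3%:R 0 - N 2%:R 0)) (c * (pz V * N 3%:R 1%:R - N 2%:R 1%:R)).

Definition Kf (x y : R) :=
  let N := Ni M in
  (c * (N 0 0 - x * N 3%:R 0)) * (c * (N 1%:R 1%:R - y * N 3%:R 1%:R)) -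
  (c * (N 1%:R 0 - y * N 3%:R 0)) * (c * (N 0 1%:R - x * N 3%:R 1%:R)).

Lemma proj_alg (H0 H1 H2 H3 g0 g1 g2 g3 : R) : H3 != 0 -> c != 0 -> g2 = -1 / c ->
  0 = g0 * H0 + g1 * H1 + g2 * H2 + g3 * H3 ->
  H2 / H3 = c * g0 * (H0 / H3) + c * g1 * (H1 / H3) + c * g3.
Proof.
move=> hz hc e2 rt; apply: eq_of_sub0.
have -> : H2 / H3 - (c * g0 * (H0 / H3) + c * g1 * (H1 / H3) + c * g3) =
  - (c / H3) * (g0 * H0 + g1 * H1 + g2 * H2 + g3 * H3).
  by rewrite e2; field; rewrite hc hz.
by rewrite -rt mulr0.
Qed.

Lemma proj_plane (q1 q2 e : R) (Q P : pt R) : onpl (q1, q2) e Q -> projrel Q P ->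
  let g := rowv q1 q2 (-1) e *m Ni M in
  onpl (c * g 0 0, c * g 0 1%:R) (c * g 0 3%:R) P.
Proof.
move=> hQ [hz ->] g.
have [rt g2] := row_trick hMu hMc (rowv q1 q2 (-1) e) Q.
have [r0 r1 r2 r3] := rowvE q1 q2 (-1) e.
have [h0 [h1 [h2 h3]]] := homE Q.
have lhs : (rowv q1 q2 (-1) e *m Defs.hom Q) 0 0 = 0.
  by rewrite mulrc r0 r1 r2 r3 h0 h1 h2 h3 hQ /=; ring.
rewrite r2 lhs in g2 rt.
rewrite -/g in rt g2.
have hc := c_neq0 hMu hMc.
rewrite /onpl /=.
exact: (proj_alg hz hc g2 rt).
Qed.

Lemma plane_quad_dt (F1 : net R) a b :
  convex_quad (F1 a b) (F1 a.+1 b) (F1 a.+1 b.+1) (F1 a b.+1) -> pz (face_normal F1 a b) != 0 ->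
  exists e, [/\ onpl (dual_top F1 a b) e (F1 a b), onpl (dual_top F1 a b) e (F1 a.+1 b),
               onpl (dual_top F1 a b) e (F1 a.+1 b.+1) & onpl (dual_top F1 a b) e (F1 a b.+1)].
Proof. move=> hq hN; have := plane_quad hq hN; by eexists; exact: H. Qed.


Lemma face_dual_proj (F1 G1 : net R) a b (V : pt R) :
  convex_quad (F1 a b) (F1 a.+1 b) (F1 a.+1 b.+1) (F1 a b.+1) ->
  pz (face_normal F1 a b) != 0 -> pz (face_normal G1 a b) != 0 ->
  [\/ V = F1 a b, V = F1 a.+1 b, V = F1 a.+1 b.+1 | V = F1 a b.+1] ->
  projrel (F1 a b) (G1 a b) -> projrel (F1 a.+1 b) (G1 a.+1 b) ->
  projrel (F1 a.+1 b.+1) (G1 a.+1 b.+1) ->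
  dual_top G1 a b = affV V (dual_top F1 a b).
Proof.
move=> hq hN hNG hV pA pB pC.
have [e [oA oB oC oD]] := plane_quad_dt hq hN.
move: oA oB oC oD hV; case: (dual_top F1 a b) => q1 q2 oA oB oC oD hV.
have oV : onpl (q1, q2) e V by case: hV => ->.
have eV : e = pz V - q1 * px V - q2 * py V by rewrite oV /=; ring.
have gA := proj_plane oA pA.
have gB := proj_plane oB pB.
have gC := proj_plane oC pC.
have := plane_dual gA gB gC hNG.
rewrite -/(face_normal G1 a b) => hd.
transitivity (- px (face_normal G1 a b) / pz (face_normal G1 a b),
              - py (face_normal G1 a b) / pz (face_normal G1 a b)); first by [].
rewrite hd /affV /aff /=.
have [r0 r1 r2 r3] := rowvE q1 q2 (-1) e.
rewrite !mulrow r0 r1 r2 r3 eV.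
by congr (_, _); ring.
Qed.

Lemma curv_proj (F1 G1 : net R) i0 j0 :
  (forall a b, (i0 <= a)%N -> (a <= i0.+2)%N -> (j0 <= b)%N -> (b <= j0.+2)%N ->
     projrel (F1 a b) (G1 a b)) ->
  (forall a b, (i0 <= a)%N -> (a <= i0.+1)%N -> (j0 <= b)%N -> (b <= j0.+1)%N ->
     [/\ convex_quad (F1 a b) (F1 a.+1 b) (F1 a.+1 b.+1) (F1 a b.+1),
         pz (face_normal F1 a b) != 0 & pz (face_normal G1 a b) != 0]) ->
  curvature G1 i0.+1 j0.+1 = Kf (px (F1 i0.+1 j0.+1)) (py (F1 i0.+1 j0.+1)) * curvature F1 i0.+1 j0.+1.
Proof.
move=> hP hQ.
have P a b : (i0 <= a)%N -> (a <= i0.+2)%N -> (j0 <= b)%N -> (b <= j0.+2)%N ->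
   projrel (F1 a b) (G1 a b) by exact: hP.
set V := F1 i0.+1 j0.+1.
have [q0 n0 m0] := hQ i0 j0 (leqnn _) (leqnSn _) (leqnn _) (leqnSn _).
have [q1 n1 m1] := hQ i0.+1 j0 (leqnSn _) (leqnn _) (leqnn _) (leqnSn _).
have [q2 n2 m2] := hQ i0.+1 j0.+1 (leqnSn _) (leqnn _) (leqnSn _) (leqnn _).
have [q3 n3 m3] := hQ i0 j0.+1 (leqnn _) (leqnSn _) (leqnSn _) (leqnn _).
have lo0 : (i0 <= i0)%N := leqnn i0.
have lo1 : (i0 <= i0.+1)%N := leqnSn i0.
have lo2 : (i0 <= i0.+2)%N := leqW (leqnSn i0).
have up1 : (i0.+1 <= i0.+2)%N := leqnSn i0.+1.
have up2 : (i0.+2 <= i0.+2)%N := leqnn i0.+2.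
have lb0 : (j0 <= j0)%N := leqnn j0.
have lb1 : (j0 <= j0.+1)%N := leqnSn j0.
have lb2 : (j0 <= j0.+2)%N := leqW (leqnSn j0).
have ub1 : (j0.+1 <= j0.+2)%N := leqnSn j0.+1.
have ub2 : (j0.+2 <= j0.+2)%N := leqnn j0.+2.
have d0 : dual_top G1 i0 j0 = affV V (dual_top F1 i0 j0) :=
  face_dual_proj q0 n0 m0 (Or43 _ _ _ erefl) (P _ _ lo0 lo2 lb0 lb2) (P _ _ lo1 up1 lb0 lb2) (P _ _ lo1 up1 lb1 ub1).
have d1 : dual_top G1 i0.+1 j0 = affV V (dual_top F1 i0.+1 j0) :=
  face_dual_proj q1 n1 m1 (Or44 _ _ _ erefl) (P _ _ lo1 up1 lb0 lb2) (P _ _ lo2 up2 lb0 lb2) (P _ _ lo2 up2 lb1 ub1).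
have d2 : dual_top G1 i0.+1 j0.+1 = affV V (dual_top F1 i0.+1 j0.+1) :=
  face_dual_proj q2 n2 m2 (Or41 _ _ _ erefl) (P _ _ lo1 up1 lb1 ub1) (P _ _ lo2 up2 lb1 ub1) (P _ _ lo2 up2 lb2 ub2).
have d3 : dual_top G1 i0 j0.+1 = affV V (dual_top F1 i0 j0.+1) :=
  face_dual_proj q3 n3 m3 (Or42 _ _ _ erefl) (P _ _ lo0 lo2 lb1 ub1) (P _ _ lo1 up1 lb1 ub1) (P _ _ lo1 up1 lb2 ub2).
have -> : curvature G1 i0.+1 j0.+1 = Om (dual_top G1 i0 j0) (dual_top G1 i0.+1 j0)
  (dual_top G1 i0.+1 j0.+1) (dual_top G1 i0 j0.+1) by [].
have -> : curvature F1 i0.+1 j0.+1 = Om (dual_top F1 i0 j0) (dual_top F1 i0.+1 j0)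
  (dual_top F1 i0.+1 j0.+1) (dual_top F1 i0 j0.+1) by [].
rewrite d0 d1 d2 d3 /affV Om_aff.
by [].
Qed.


Lemma DAcurv t i j : 0 <= t <= 1 -> (1 <= i < m)%N -> (1 <= j < n)%N ->
  curvature (Ga t) i j = curvature G i j.
Proof.
move=> ht; case: i => [|i] // hi; case: j => [|j] // hj.
have hi1 : (i.+1 < m)%N by exact: hi.
have hj1 : (j.+1 < n)%N by exact: hj.
have hi0 : (i < m)%N by apply: ltnW.
have hj0 : (j < n)%N by apply: ltnW.
have [C0 w0] := famW ht hi0 hj0.
have [C1 w1] := famW ht hi1 hj0.
have [C2 w2] := famW ht hi1 hj1.
have [C3 w3] := famW ht hi0 hj1.
have nF0 := nonvert_all hF hi0 hj0.
have nF1 := nonvert_all hF hi1 hj0.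
have nF2 := nonvert_all hF hi1 hj1.
have nF3 := nonvert_all hF hi0 hj1.
have eFam := curv_common w0 w1 w2 w3 nF0 nF1 nF2 nF3.
have eFv := curv_common (Fv_wit w0) (Fv_wit w1) (Fv_wit w2) (Fv_wit w3) nF0 nF1 nF2 nF3.
have eFvF : curvature (Fv t) i.+1 j.+1 = curvature F i.+1 j.+1.
  by rewrite eFv -(famK ht hi hj) eFam.
have hP : forall a b, (i <= a)%N -> (a <= i.+2)%N -> (j <= b)%N -> (b <= j.+2)%N ->
    projrel (Fv t a b) (Ga t a b).
  by move=> a b _ ha _ hb; apply: projFv; [exact: leq_trans ha hi1 | exact: leq_trans hb hj1].
have hP' : forall a b, (i <= a)%N -> (a <= i.+2)%N -> (j <= b)%N -> (b <= j.+2)%N ->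
    projrel (F a b) (G a b).
  by move=> a b _ ha _ hb; apply: hMG; [exact: leq_trans ha hi1 | exact: leq_trans hb hj1].
have hQ : forall a b, (i <= a)%N -> (a <= i.+1)%N -> (j <= b)%N -> (b <= j.+1)%N ->
    [/\ convex_quad (Fv t a b) (Fv t a.+1 b) (Fv t a.+1 b.+1) (Fv t a b.+1),
        pz (face_normal (Fv t) a b) != 0 & pz (face_normal (Ga t) a b) != 0].
  move=> a b _ ha _ hb.
  have ha' : (a < m)%N by exact: leq_ltn_trans ha hi1.
  have hb' : (b < n)%N by exact: leq_ltn_trans hb hj1.
  have [C wC] := famW ht ha' hb'.
  have nFa := nonvert_all hF ha' hb'.
  have nGa := nonvert_all hG ha' hb'.
  split.
  - exact: (cq_wit (Fv_wit wC) (Fnet' ha' hb')).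
  - by rewrite (dual_top_img (Fv_wit wC) nFa).2.
  - by rewrite (dual_top_img (Ga_wit ha' hb' wC) nGa).2.
have hQ' : forall a b, (i <= a)%N -> (a <= i.+1)%N -> (j <= b)%N -> (b <= j.+1)%N ->
    [/\ convex_quad (F a b) (F a.+1 b) (F a.+1 b.+1) (F a b.+1),
        pz (face_normal F a b) != 0 & pz (face_normal G a b) != 0].
  move=> a b _ ha _ hb.
  have ha' : (a < m)%N by exact: leq_ltn_trans ha hi1.
  have hb' : (b < n)%N by exact: leq_ltn_trans hb hj1.
  have nFa := nonvert_all hF ha' hb'.
  have nGa := nonvert_all hG ha' hb'.
  by split; [exact: Fnet' | | ].
have eGa := curv_proj hP hQ.
have eG := curv_proj hP' hQ'.
rewrite eGa eG eFvF.
by [].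
Qed.

Lemma DAnontriv : ~ (forall t, 0 <= t <= 1 -> exists C : icong R,
  forall i j, (i <= m)%N -> (j <= n)%N -> Ga t i j = icong_apply C (G i j)).
Proof.
move=> H; apply: famNT => t ht.
have [D hD] := H t ht.
have [hm [hn _]] := hF.
have hm0 : (0 < m)%N by apply: leq_trans hm.
have hn0 : (0 < n)%N by apply: leq_trans hn.
have hc := c_neq0 hMu hMc.
pose k1 := (c_c1 D * M 0 0 + c_c2 D * M 1%:R 0 + pz (c_b D) * M 3%:R 0) / c.
pose k2 := (c_c1 D * M 0 1%:R + c_c2 D * M 1%:R 1%:R + pz (c_b D) * M 3%:R 1%:R) / c.
pose k0 := (c_c1 D * M 0 3%:R + c_c2 D * M 1%:R 3%:R + pz (c_b D) * M 3%:R 3%:R) / c.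
have hdl : forall a b, (a <= m)%N -> (b <= n)%N ->
    dla t a b = k1 * px (F a b) + k2 * py (F a b) + k0.
  move=> a b ha hb.
  have e := congr1 (@pz R) (hD a b ha hb).
  have [hz hGe] := hMG ha hb.
  move: e hz; rewrite /Ga /icong_apply /wv hGe /=.
  have [f0 f1 f2 f3] := hE hMc (F a b).
  move: f0 f1 f2 f3.
  move: ((M *m Defs.hom (F a b)) 0 0) ((M *m Defs.hom (F a b)) 1%:R 0)
        ((M *m Defs.hom (F a b)) 2%:R 0) ((M *m Defs.hom (F a b)) 3%:R 0) => H0 H1 H2 H3.
  move=> f0 f1 f2 f3 e hz.
  have e' : c * dla t a b / H3 = c_c1 D * (H0 / H3) + c_c2 D * (H1 / H3) + pz (c_b D).
    apply: (@addrI _ (H2 / H3)); rewrite e; ring.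
  have -> : dla t a b = (c * dla t a b / H3) * H3 / c by field; rewrite hc hz.
  rewrite e' /k1 /k2 /k0.
  rewrite f3 in hz.
  by rewrite f0 f1 f3; field; rewrite hc hz.
apply: (@global _ F (Fam t) m n k1 k2 hm0 hn0 (nonvert_all hF) (famW ht)).
move=> i j C hi hj [wa wb wc _].
have dA := dla_of wa; have dB := dla_of wb; have dC := dla_of wc.
have lA := hdl i j (ltnW hi) (ltnW hj).
have lB := hdl i.+1 j hi (ltnW hj).
have lC := hdl i.+1 j.+1 hi hj.
have eq1 : (c_c1 C - k1) * (px (F i.+1 j) - px (F i j)) + (c_c2 C - k2) * (py (F i.+1 j) - py (F i j)) = 0.
  have -> : (c_c1 C - k1) * (px (F i.+1 j) - px (F i j)) + (c_c2 C - k2) * (py (F i.+1 j) - py (F i j)) =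
    ((c_c1 C * px (F i.+1 j) + c_c2 C * py (F i.+1 j) + pz (c_b C)) -
     (c_c1 C * px (F i j) + c_c2 C * py (F i j) + pz (c_b C))) -
    ((k1 * px (F i.+1 j) + k2 * py (F i.+1 j) + k0) - (k1 * px (F i j) + k2 * py (F i j) + k0)) by ring.
  by rewrite -dA -dB -lA -lB subrr.
have eq2 : (c_c1 C - k1) * (px (F i.+1 j.+1) - px (F i.+1 j)) + (c_c2 C - k2) * (py (F i.+1 j.+1) - py (F i.+1 j)) = 0.
  have -> : (c_c1 C - k1) * (px (F i.+1 j.+1) - px (F i.+1 j)) + (c_c2 C - k2) * (py (F i.+1 j.+1) - py (F i.+1 j)) =
    ((c_c1 C * px (F i.+1 j.+1) + c_c2 C * py (F i.+1 j.+1) + pz (c_b C)) -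
     (c_c1 C * px (F i.+1 j) + c_c2 C * py (F i.+1 j) + pz (c_b C))) -
    ((k1 * px (F i.+1 j.+1) + k2 * py (F i.+1 j.+1) + k0) - (k1 * px (F i.+1 j) + k2 * py (F i.+1 j) + k0)) by ring.
  by rewrite -dB -dC -lB -lC subrr.
have hw : (px (F i.+1 j) - px (F i j)) * (py (F i.+1 j.+1) - py (F i.+1 j)) -
          (py (F i.+1 j) - py (F i j)) * (px (F i.+1 j.+1) - px (F i.+1 j)) != 0.
  have -> : (px (F i.+1 j) - px (F i j)) * (py (F i.+1 j.+1) - py (F i.+1 j)) -
          (py (F i.+1 j) - py (F i j)) * (px (F i.+1 j.+1) - px (F i.+1 j)) = pz (face_normal F i j)
    by rewrite /face_normal /=; ring.
  have := nonvert_all hF hi hj; done.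
have [a1 a2] := lin2 eq1 eq2 hw.
by split; apply: eq_of_sub0.
Qed.

Lemma da_flex : flexible m n G.
Proof.
exists Ga; split; first exact: Ga0.
split.
  move=> t ht i j hi hj; have [C wC] := famW ht hi hj.
  exact: (cq_wit (Ga_wit hi hj wC) (Gnet' hi hj)).
split.
  move=> i j hi hj; split; first exact: wcC.
  split; first exact: wcC.
  rewrite /Ga /=; apply: wcD; first exact: wcC.
  apply: wcM; last exact: wcC.
  by apply: wcM; [exact: wcC | exact: cont_dla].
split.
  move=> t ht i j hi hj; have [C wC] := famW ht hi hj.
  exists (Cda C); case: (Ga_wit hi hj wC) => a b c' d; by do !split.
split.
  move=> t ht i j hi hj; have := DAcurv ht hi hj; done.
exact: DAnontriv.
Qed.

End DA.

Unset Implicit Arguments.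
Set Strict Implicit.

Theorem corollary3 (R : realType) (m n : nat) (F : net R) :
  dual_convex m n F -> flexible m n F ->
  (forall G : net R, dual_convex m n G -> combescure m n F G -> flexible m n G) /\
  (forall G : net R, dual_convex m n G -> dual_affine_image m n F G -> flexible m n G).
Proof.
move=> hF [Fam [f0 [fnet [fcont [fW [fK fNT]]]]]].
have fW' : forall t, 0 <= t <= 1 -> forall i j, (i < m)%N -> (j < n)%N ->
    exists C, wit F (Fam t) i j C.
  move=> t ht i j hi hj; have [C hC] := fW t ht i j hi hj.
  by exists C; apply: wit_of.
have fC : forall i j, (i <= m)%N -> (j <= n)%N ->
    {within `[0%R, 1%R], continuous (fun t : R => pz (Fam t i j))}%classic.
  by move=> i j hi hj; case: (fcont i j hi hj) => _ [].
split.
  move=> G hG hC.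
  exact: (comb_flex hF hG hC f0 fW' fC fK fNT).
move=> G hG [M [[hMu [c hMc]] hMG]].
exact: (da_flex hF hG hMu hMc hMG f0 fW' fC fK fNT).
Qed.
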